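(* There exist a compact metric space $X$ and a flow $\phi$ on $X$ which is not singular-expansive but such that, for every compact invariant set $\Lambda\subset X$ with $\Lambda\cap Sing(\phi)=\emptyset$, the restricted flow $\phi|_\Lambda$ is expansive.
   Context: A flow is a continuous $\phi:\mathbb{R}\times X\to X$ with $\phi_0=\mathrm{id}$, $\phi_{t+s}=\phi_t\circ\phi_s$; $\phi_I(x)=\{\phi_t(x):t\in I\}$; $Sing(\phi)$ is the set of fixed points; $dist(z,A)=\inf_{a\in A}d(z,a)$, with $dist(z,\emptyset)=diam(X)$. $\phi$ is singular-expansive if for every $\epsilon>0$ there is $\delta>0$ such that whenever $x,y\in X$ and an increasing homeomorphism $s:\mathbb{R}\to\mathbb{R}$ satisfy $d(\phi_t(x),\phi_{s(t)}(y))\le\delta\,dist(\phi_t(x),Sing(\phi))$ for all $t$, then $\phi_{s(t_0)}(y)\in\phi_{[t_0-\epsilon,t_0+\epsilon]}(x)$ for some $t_0\in\mathbb{R}$. A flow $\psi$ on a compact metric space $Y$ is expansive if for every $\epsilon>0$ there is $\delta>0$ such that whenever $x,y\in Y$ and a continuous $s:\mathbb{R}\to\mathbb{R}$ with $s(0)=0$ satisfy $d(\psi_t(x),\psi_{s(t)}(y))\le\delta$ for all $t$, then $y\in\psi_{[-\epsilon,\epsilon]}(x)$. *)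

(* Defs.v *)
From Stdlib Require Import Reals List.
From Coquelicot Require Import Coquelicot.
Open Scope R_scope.
Set Implicit Arguments.

Record MetricSpace := {
  carrier :> Type;
  mdist : carrier -> carrier -> R;
  mdist_ge0 : forall x y, 0 <= mdist x y;
  mdist_eq0 : forall x y, mdist x y = 0 <-> x = y;
  mdist_sym : forall x y, mdist x y = mdist y x;
  mdist_tri : forall x y z, mdist x z <= mdist x y + mdist y z
}.

Section Metric.
Context {X : MetricSpace}.
Notation d := (mdist X).

Definition open_set (U : X -> Prop) : Prop :=
  forall x, U x -> exists r, 0 < r /\ forall y, d x y < r -> U y.

Definition compact_set (K : X -> Prop) : Prop :=
  forall (I : Type) (U : I -> X -> Prop),
    (forall i, open_set (U i)) ->
    (forall x, K x -> exists i, U i x) ->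
    exists l : list I, forall x, K x -> exists i, In i l /\ U i x.

Definition compact_space : Prop := compact_set (fun _ => True).

Definition diam : R := real (Lub_Rbar (fun r => exists x y, r = d x y)).

Definition dist_set (z : X) (A : X -> Prop) : R :=
  real (Glb_Rbar (fun r => (exists a, A a /\ r = d z a)
                         \/ ((forall a, ~ A a) /\ r = diam))).

Definition is_flow (phi : R -> X -> X) : Prop :=
  (forall t x eps, 0 < eps -> exists delta, 0 < delta /\
      forall s y, Rabs (s - t) < delta -> d x y < delta ->
        d (phi t x) (phi s y) < eps)
  /\ (forall x, phi 0 x = x)
  /\ (forall t s x, phi (t + s) x = phi t (phi s x)).

Definition Sing (phi : R -> X -> X) (x : X) : Prop := forall t, phi t x = x.

Definition incr_homeo (s : R -> R) : Prop :=
  continuity s /\ (forall a b, a < b -> s a < s b) /\ (forall y, exists x, s x = y).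

Definition singular_expansive (phi : R -> X -> X) : Prop :=
  forall eps, 0 < eps -> exists delta, 0 < delta /\
    forall (x y : X) (s : R -> R), incr_homeo s ->
      (forall t, d (phi t x) (phi (s t) y) <= delta * dist_set (phi t x) (Sing phi)) ->
      exists t0 u, t0 - eps <= u <= t0 + eps /\ phi (s t0) y = phi u x.

Definition invariant (phi : R -> X -> X) (L : X -> Prop) : Prop :=
  forall t x, L x -> L (phi t x).

Definition expansive_on (phi : R -> X -> X) (L : X -> Prop) : Prop :=
  forall eps, 0 < eps -> exists delta, 0 < delta /\
    forall (x y : X) (s : R -> R), L x -> L y -> continuity s -> s 0 = 0 ->
      (forall t, d (phi t x) (phi (s t) y) <= delta) ->
      exists u, - eps <= u <= eps /\ y = phi u x.

End Metric.

(* Main.v *)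
Require Import Defs.
From Stdlib Require Import Reals.
From Stdlib Require Import Lra Psatz List Arith Lia.
From Stdlib Require Import ClassicalEpsilon ProofIrrelevance.
Require Stdlib.Reals.Rtopology.
From Coquelicot Require Import Coquelicot.
Open Scope R_scope.

Definition cc (n : nat) : R := (/4) ^ (S n).

Lemma cc_pos n : 0 < cc n.
Proof. unfold cc. apply pow_lt. lra. Qed.

Lemma cc_S n : cc (S n) = cc n / 4.
Proof. unfold cc. simpl. lra. Qed.

Lemma cc_le n : cc n <= 1/4.
Proof. induction n. unfold cc; simpl; lra. rewrite cc_S. pose proof (cc_pos n). lra. Qed.

Lemma cc_mono n m : (n <= m)%nat -> cc m <= cc n.
Proof. induction 1. lra. rewrite cc_S. pose proof (cc_pos m). lra. Qed.

Lemma cc_lt4 n m : (n < m)%nat -> cc m <= cc n / 4.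
Proof. intros H. apply (cc_mono (S n)) in H. rewrite cc_S in H. lra. Qed.

Lemma cc_small eta : 0 < eta -> exists n, cc n <= eta.
Proof.
  intros He. destruct (pow_lt_1_zero (/4)) with (y := eta) as [N HN].
  rewrite Rabs_pos_eq; lra. exact He.
  exists N. specialize (HN (S N) ltac:(lia)). unfold cc.
  rewrite Rabs_pos_eq in HN. lra. apply pow_le. lra.
Qed.

Definition S01 := {p : nat * R | 0 <= snd p <= 1}.
Definition Pt := option S01.

Lemma S01_eq (a b : S01) : proj1_sig a = proj1_sig b -> a = b.
Proof. destruct a, b; simpl; intros ->; f_equal; apply proof_irrelevance. Qed.

Definition e (p : Pt) : R :=
  match p with None => 0 | Some q => (2 + snd (proj1_sig q)) * cc (fst (proj1_sig q)) end.

Lemma e_bounds (q : S01) : 2 * cc (fst (proj1_sig q)) <= e (Some q) <= 3 * cc (fst (proj1_sig q)).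
Proof. destruct q as [[n u] H]; simpl in *. pose proof (cc_pos n). nra. Qed.

Lemma e_inj p q : e p = e q -> p = q.
Proof.
  destruct p as [p|], q as [q|]; intros H; auto.
  - f_equal. pose proof (e_bounds p) as Bp. pose proof (e_bounds q) as Bq.
    destruct p as [[n u] Hu], q as [[m v] Hv]; simpl in *.
    destruct (lt_eq_lt_dec n m) as [[Hlt| ->]|Hlt].
    + pose proof (cc_lt4 _ _ Hlt). pose proof (cc_pos m). pose proof (cc_pos n). lra.
    + apply S01_eq; simpl. pose proof (cc_pos m). f_equal. apply Rmult_eq_reg_r in H; lra.
    + pose proof (cc_lt4 _ _ Hlt). pose proof (cc_pos m). pose proof (cc_pos n). lra.
  - pose proof (e_bounds p). pose proof (cc_pos (fst (proj1_sig p))). change (e None) with 0 in H. lra.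
  - pose proof (e_bounds q). pose proof (cc_pos (fst (proj1_sig q))). change (e None) with 0 in H. lra.
Qed.

Definition dd (p q : Pt) : R := Rabs (e p - e q).

Lemma dd_ge0 p q : 0 <= dd p q. Proof. apply Rabs_pos. Qed.
Lemma dd_eq0 p q : dd p q = 0 <-> p = q.
Proof.
  unfold dd; split.
  - intros H. apply e_inj. destruct (Req_dec (e p) (e q)); auto.
    exfalso. assert (Rabs (e p - e q) > 0) by (apply Rabs_pos_lt; lra). lra.
  - intros ->. rewrite Rminus_diag, Rabs_R0. reflexivity.
Qed.
Lemma dd_sym p q : dd p q = dd q p.
Proof. unfold dd. apply Rabs_minus_sym. Qed.
Lemma dd_tri p q r : dd p r <= dd p q + dd q r.
Proof. unfold dd. replace (e p - e r) with ((e p - e q) + (e q - e r)) by ring. apply Rabs_triang. Qed.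

Definition Xm : MetricSpace := {| carrier := Pt; mdist := dd; mdist_ge0 := dd_ge0; mdist_eq0 := dd_eq0; mdist_sym := dd_sym; mdist_tri := dd_tri |}.

Definition Lg (a u : R) : R := u * exp a / (1 - u + u * exp a).

Lemma D_pos a u : 0 <= u <= 1 -> 0 < 1 - u + u * exp a.
Proof. intros H. pose proof (exp_pos a). destruct (Req_dec u 0). subst; lra. nra. Qed.

Lemma Lg_range a u : 0 <= u <= 1 -> 0 <= Lg a u <= 1.
Proof.
  intros H. pose proof (D_pos a u H). pose proof (exp_pos a). unfold Lg. split.
  - apply Rle_mult_inv_pos; nra.
  - apply Rmult_le_reg_r with (1 - u + u * exp a); auto.
    unfold Rdiv. rewrite Rmult_assoc, Rinv_l by lra. nra.
Qed.

Lemma Lg_comp a b u : 0 <= u <= 1 -> Lg (a + b) u = Lg a (Lg b u).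
Proof.
  intros H. pose proof (D_pos b u H). pose proof (D_pos a (Lg b u) (Lg_range b u H)).
  revert H1. unfold Lg. rewrite exp_plus. intros H1. field. split; try lra.
  pose proof (D_pos (a+b) u H) as Hd. rewrite exp_plus in Hd. nra.
Qed.

Definition flowS (t : R) (q : S01) : S01 :=
  let (p, H) := q in
  exist (fun p => 0 <= snd p <= 1) (fst p, Lg (t * cc (fst p)) (snd p)) (Lg_range _ _ H).

Definition phi (t : R) (p : Xm) : Xm := option_map (flowS t) p.

Lemma e_phi t n u Hu :
  e (phi t (Some (exist _ (n, u) Hu))) = (2 + Lg (t * cc n) u) * cc n.
Proof. reflexivity. Qed.

Lemma Lg_0 u : 0 <= u <= 1 -> Lg 0 u = u.
Proof. intros H. unfold Lg. rewrite exp_0. field. lra. Qed.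

Lemma phi_0 p : phi 0 p = p.
Proof.
  destruct p as [[[n u] H]|]; simpl; auto. f_equal. apply S01_eq; simpl.
  rewrite Rmult_0_l, Lg_0; auto.
Qed.

Lemma phi_comp t s p : phi (t + s) p = phi t (phi s p).
Proof.
  destruct p as [[[n u] H]|]; simpl; auto. f_equal. apply S01_eq; simpl.
  rewrite Rmult_plus_distr_r, Lg_comp; auto.
Qed.

Lemma exp_ge1p x : 1 + x <= exp x.
Proof. destruct (Req_dec x 0). subst. rewrite exp_0. lra. left. apply exp_ineq1; auto. Qed.

Lemma exp_le x : 0 <= x <= 1/2 -> exp x <= 1 + 2 * x.
Proof.
  intros H. assert (exp x * exp (-x) = 1) by (rewrite <- exp_plus, Rplus_opp_r, exp_0; auto).
  pose proof (exp_ge1p (-x)). pose proof (exp_pos x). nra.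
Qed.

Lemma Lg_lip a u v : 0 <= u <= 1 -> 0 <= v <= 1 ->
  Rabs (Lg a u - Lg a v) <= (exp a + / exp a) * Rabs (u - v).
Proof.
  intros Hu Hv. pose proof (D_pos a u Hu). pose proof (D_pos a v Hv). pose proof (exp_pos a).
  remember (1 - u + u * exp a) as Du eqn:HDu. remember (1 - v + v * exp a) as Dv eqn:HDv.
  assert (Lg a u - Lg a v = (exp a / (Du * Dv)) * (u - v)).
  { subst Du Dv. unfold Lg. field. split; lra. }
  rewrite H2, Rabs_mult. apply Rmult_le_compat_r. apply Rabs_pos.
  rewrite Rabs_pos_eq by (apply Rle_mult_inv_pos; nra).
  destruct (Rle_dec 1 (exp a)).
  - assert (1 <= Du) by (rewrite HDu; nra). assert (1 <= Dv) by (rewrite HDv; nra).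
    assert (exp a / (Du * Dv) <= exp a).
    { apply Rmult_le_reg_r with (Du * Dv). nra. unfold Rdiv. rewrite Rmult_assoc, Rinv_l by (intro; nra). assert (1 <= Du * Dv) by nra. nra. }
    assert (0 < / exp a) by (apply Rinv_0_lt_compat; auto). lra.
  - assert (exp a <= Du) by (rewrite HDu; nra). assert (exp a <= Dv) by (rewrite HDv; nra).
    assert (exp a / (Du * Dv) <= / exp a).
    { apply Rmult_le_reg_r with (Du * Dv * exp a). repeat apply Rmult_lt_0_compat; lra. unfold Rdiv.
      replace (exp a * / (Du * Dv) * (Du * Dv * exp a)) with (exp a * exp a) by (field; repeat split; intro; nra).
      replace (/ exp a * (Du * Dv * exp a)) with (Du * Dv) by (field; repeat split; intro; nra). nra. }
    lra.
Qed.

Lemma Lg_time a u : 0 <= u <= 1 -> Rabs a <= 1/2 -> Rabs (Lg a u - u) <= 2 * Rabs a.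
Proof.
  intros Hu Ha. pose proof (D_pos a u Hu). pose proof (exp_pos a).
  remember (1 - u + u * exp a) as D eqn:HD.
  assert (Lg a u - u = (u * (1 - u)) * ((exp a - 1) / D)).
  { subst D. unfold Lg. field. lra. }
  rewrite H1, Rabs_mult. rewrite (Rabs_pos_eq (u * (1-u))) by nra.
  assert (Rabs ((exp a - 1) / D) <= 2 * Rabs a).
  { destruct (Rle_dec 0 a).
    - rewrite (Rabs_pos_eq a) in Ha by lra. rewrite (Rabs_pos_eq a) by lra. pose proof (exp_le a ltac:(lra)).
      assert (1 <= exp a) by (pose proof (exp_ge1p a); lra).
      assert (1 <= D) by (rewrite HD; nra).
      rewrite Rabs_pos_eq by (apply Rle_mult_inv_pos; lra).
      apply Rmult_le_reg_r with D. lra. unfold Rdiv. rewrite Rmult_assoc, Rinv_l by (intro; lra). nra.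
    - rewrite (Rabs_left a) in Ha by lra. rewrite (Rabs_left a) by lra. pose proof (exp_ge1p a).
      assert (exp a < 1) by (rewrite <- exp_0; apply exp_increasing; lra).
      assert (exp a <= D) by (rewrite HD; nra).
      rewrite Rabs_left. 2:{ unfold Rdiv. apply Rmult_neg_pos. lra. apply Rinv_0_lt_compat; lra. }
      apply Rmult_le_reg_r with D. lra. unfold Rdiv.
      replace (- ((exp a - 1) * / D) * D) with (1 - exp a) by (field; repeat split; intro; lra). nra. }
  pose proof (Rabs_pos ((exp a - 1) / D)). nra.
Qed.

Lemma exp_mono x y : x <= y -> exp x <= exp y.
Proof. intros [H| ->]. left; apply exp_increasing; auto. lra. Qed.

Lemma expabs_ge1 t : 1 <= exp (Rabs t).
Proof. rewrite <- exp_0. apply exp_mono. apply Rabs_pos. Qed.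

Lemma pb c w : 0 < c -> 0 <= w <= 1 -> 2 * c <= (2 + w) * c <= 3 * c.
Proof. intros; split; nra. Qed.

Lemma spatial t p q : dd (phi t p) (phi t q) <= 3 * exp (Rabs t) * dd p q.
Proof.
  pose proof (expabs_ge1 t) as E1. unfold dd.
  destruct p as [[[n u] Hu]|], q as [[[m v] Hv]|];
    cbn [phi option_map flowS e proj1_sig fst snd]; cbn [snd] in *.
  - destruct (lt_eq_lt_dec n m) as [[Hlt| ->]|Hlt].
    + pose proof (cc_lt4 _ _ Hlt). pose proof (cc_pos m). pose proof (cc_pos n).
      
      pose proof (Lg_range (t * cc n) u Hu). pose proof (Lg_range (t * cc m) v Hv).
      pose proof (pb _ _ H1 Hu). pose proof (pb _ _ H0 Hv). pose proof (pb _ _ H1 H2). pose proof (pb _ _ H0 H3).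
      rewrite (Rabs_pos_eq ((2 + u) * cc n - (2 + v) * cc m)) by lra.
      apply Rle_trans with (3 * cc n). apply Rabs_le; lra.
      assert (5*cc n/4 <= ((2+u)*cc n - (2+v)*cc m)) by lra. nra.
    +  pose proof (cc_pos m).
      replace ((2 + Lg (t * cc m) u) * cc m - (2 + Lg (t * cc m) v) * cc m)
        with (cc m * (Lg (t * cc m) u - Lg (t * cc m) v)) by ring.
      replace ((2 + u) * cc m - (2 + v) * cc m) with (cc m * (u - v)) by ring.
      rewrite !Rabs_mult, (Rabs_pos_eq (cc m)) by lra.
      pose proof (Lg_lip (t * cc m) u v Hu Hv).
      assert (exp (t * cc m) + / exp (t * cc m) <= 3 * exp (Rabs t)).
      { pose proof (cc_le m). rewrite <- exp_Ropp.
        assert (exp (t * cc m) <= exp (Rabs t)).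
        { apply exp_mono. destruct (Rle_dec 0 t). rewrite Rabs_pos_eq by lra. nra.
          rewrite Rabs_left by lra. nra. }
        assert (exp (- (t * cc m)) <= exp (Rabs t)).
        { apply exp_mono. destruct (Rle_dec 0 t). rewrite Rabs_pos_eq by lra. nra.
          rewrite Rabs_left by lra. nra. }
        lra. }
      pose proof (Rabs_pos (u - v)). pose proof (Rabs_pos (Lg (t * cc m) u - Lg (t * cc m) v)).
      assert ((exp (t*cc m) + / exp (t*cc m)) * Rabs (u-v) <= 3*exp(Rabs t)*Rabs(u-v)) by (apply Rmult_le_compat_r; lra).
      apply Rle_trans with (cc m * (3*exp(Rabs t)*Rabs(u-v))); [apply Rmult_le_compat_l; lra | right; ring].
    + pose proof (cc_lt4 _ _ Hlt). pose proof (cc_pos m). pose proof (cc_pos n).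
      
      pose proof (Lg_range (t * cc n) u Hu). pose proof (Lg_range (t * cc m) v Hv).
      pose proof (pb _ _ H1 Hu). pose proof (pb _ _ H0 Hv). pose proof (pb _ _ H1 H2). pose proof (pb _ _ H0 H3).
      rewrite (Rabs_left ((2 + u) * cc n - (2 + v) * cc m)) by lra.
      apply Rle_trans with (3 * cc m). apply Rabs_le; lra.
      assert (5*cc m/4 <= -((2+u)*cc n - (2+v)*cc m)) by lra. nra.
  -  pose proof (cc_pos n) as H1.
    pose proof (Lg_range (t * cc n) u Hu) as H2.
    pose proof (pb _ _ H1 Hu). pose proof (pb _ _ H1 H2).
    rewrite !Rminus_0_r, !Rabs_pos_eq by lra.
    assert (0 <= (exp (Rabs t) - 1) * ((2+u)*cc n)) by (apply Rmult_le_pos; lra). rewrite (Rabs_pos_eq ((2+u)*cc n)) by lra. nra.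
  -  pose proof (cc_pos m) as H0.
    pose proof (Lg_range (t * cc m) v Hv) as H3.
    pose proof (pb _ _ H0 Hv). pose proof (pb _ _ H0 H3).
    rewrite !Rminus_0_l, !Rabs_Ropp.
    rewrite (Rabs_pos_eq ((2+v)*cc m)) by lra. rewrite Rabs_pos_eq by lra.
    assert (0 <= (exp (Rabs t) - 1) * ((2+v)*cc m)) by (apply Rmult_le_pos; lra). nra.
  - rewrite Rminus_0_r, Rabs_R0. nra.
Qed.

Lemma temporal h r : Rabs h <= 1/2 -> dd (phi h r) r <= 2 * Rabs h.
Proof.
 intros H. unfold dd. destruct r as [[[n u] Hu]|]; cbn [phi option_map flowS e proj1_sig fst snd]; cbn [snd] in *.
  -  pose proof (cc_pos n). pose proof (cc_le n).
    replace ((2 + Lg (h * cc n) u) * cc n - (2 + u) * cc n) with (cc n * (Lg (h * cc n) u - u)) by ring.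
    rewrite Rabs_mult, (Rabs_pos_eq (cc n)) by lra.
    assert (Rabs (h * cc n) <= Rabs h).
    { rewrite Rabs_mult, (Rabs_pos_eq (cc n)) by lra. pose proof (Rabs_pos h). nra. }
    pose proof (Lg_time (h * cc n) u Hu ltac:(lra)).
    pose proof (Rabs_pos (Lg (h * cc n) u - u)). nra.
  - cbn. rewrite Rminus_0_r, Rabs_R0. pose proof (Rabs_pos h). lra.
Qed.

Lemma phi_flow : is_flow phi.
Proof.
  split; [|split].
  - intros t x eps Heps. set (M := 3 * exp (Rabs t)).
    assert (HM : 3 <= M) by (unfold M; pose proof (expabs_ge1 t); lra).
    exists (Rmin (1/2) (eps / (2 * (M + 2)))). split.
    { apply Rmin_pos. lra. apply Rdiv_lt_0_compat; lra. }
    intros s y Hs Hxy.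
    assert (Hd1 : Rmin (1/2) (eps / (2 * (M + 2))) <= 1/2) by apply Rmin_l.
    assert (Hd2 : Rmin (1/2) (eps / (2 * (M + 2))) <= eps / (2 * (M + 2))) by apply Rmin_r.
    assert (Hk : eps / (2 * (M + 2)) * (M + 2) = eps / 2) by (field; lra).
    set (dl := Rmin (1/2) (eps / (2 * (M + 2)))) in *.
    change (dd (phi t x) (phi s y) < eps).
    change (dd x y < dl) in Hxy.
    pose proof (spatial t x y).
    replace (phi s y) with (phi (s - t) (phi t y)) by (rewrite <- phi_comp; f_equal; ring).
    pose proof (temporal (s - t) (phi t y) ltac:(lra)).
    pose proof (dd_tri (phi t x) (phi t y) (phi (s - t) (phi t y))).
    rewrite (dd_sym (phi t y)) in H1. fold M in H.
    pose proof (dd_ge0 x y).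
    assert (M * dd x y <= M * dl) by (apply Rmult_le_compat_l; lra).
    nra.
  - apply phi_0.
  - intros. apply phi_comp.
Qed.

Lemma dist_lb (X : MetricSpace) (z : X) (A : X -> Prop) m a0 :
  A a0 -> (forall a, A a -> m <= mdist X z a) -> m <= dist_set z A.
Proof.
  intros H0 Hm. unfold dist_set.
  destruct (Glb_Rbar_correct (fun r => (exists a, A a /\ r = mdist X z a)
                         \/ ((forall a, ~ A a) /\ r = @diam X))) as [Hlb Hglb].
  assert (Rbar_le (Glb_Rbar (fun r => (exists a, A a /\ r = mdist X z a)
                         \/ ((forall a, ~ A a) /\ r = @diam X))) (mdist X z a0)).
  { apply Hlb. left. exists a0. auto. }
  assert (Rbar_le m (Glb_Rbar (fun r => (exists a, A a /\ r = mdist X z a)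
                         \/ ((forall a, ~ A a) /\ r = @diam X)))).
  { apply Hglb. intros x [[a [Ha ->]]|[Hn _]]. simpl. apply Hm; auto. exfalso; apply (Hn a0 H0). }
  destruct (Glb_Rbar _); simpl in *; tauto.
Qed.

Lemma Lg_fix a w : 0 < a -> 0 <= w <= 1 -> Lg a w = w -> w = 0 \/ w = 1.
Proof.
  intros Ha Hw H. pose proof (D_pos a w Hw). pose proof (exp_ineq1 a ltac:(lra)).
  unfold Lg in H. assert (w * exp a = w * (1 - w + w * exp a)).
  { apply (f_equal (fun z => z * (1 - w + w * exp a))) in H. unfold Rdiv in H.
    rewrite Rmult_assoc, Rinv_l, Rmult_1_r in H by (intro; lra). exact H. }
  assert (w * (1 - w) * (exp a - 1) = 0) by nra.
  apply Rmult_integral in H3. destruct H3. apply Rmult_integral in H3. lra. lra.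
Qed.

Lemma sing_char m w Hw : Sing phi (Some (exist _ (m, w) Hw) : Xm) -> w = 0 \/ w = 1.
Proof.
  intros H. specialize (H 1). cbn in H. injection H. intros Hl.
  apply (Lg_fix (1 * cc m)). pose proof (cc_pos m). lra. exact Hw. exact Hl.
Qed.

Lemma sing_lb n u Hu (a : Xm) : Sing phi a ->
  cc n * Rmin u (1 - u) <= dd (Some (exist _ (n, u) Hu)) a.
Proof.
  intros Hs. unfold dd. cbn [snd] in Hu. pose proof (cc_pos n) as Hc.
  assert (Rmin u (1-u) <= u) by apply Rmin_l. assert (Rmin u (1-u) <= 1 - u) by apply Rmin_r.
  assert (0 <= Rmin u (1-u)) by (apply Rmin_glb; lra).
  destruct a as [[[m w] Hw]|].
  - pose proof (sing_char _ _ _ Hs) as Hw'. cbn [e proj1_sig fst snd]. cbn [snd] in Hw.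
    destruct (lt_eq_lt_dec n m) as [[Hlt| ->]|Hlt].
    + pose proof (cc_lt4 _ _ Hlt). pose proof (cc_pos m). pose proof (pb _ _ Hc Hu). pose proof (pb _ _ H3 Hw).
      rewrite Rabs_pos_eq by lra. nra.
    + replace ((2 + u) * cc m - (2 + w) * cc m) with (cc m * (u - w)) by ring.
      rewrite Rabs_mult, (Rabs_pos_eq (cc m)) by lra. apply Rmult_le_compat_l. lra.
      destruct Hw' as [-> | ->]. rewrite Rabs_pos_eq; lra. rewrite Rabs_left1; lra.
    + pose proof (cc_lt4 _ _ Hlt). pose proof (cc_pos m). pose proof (pb _ _ Hc Hu). pose proof (pb _ _ H3 Hw).
      rewrite Rabs_left by lra. nra.
  - cbn [e proj1_sig fst snd]. rewrite Rminus_0_r. pose proof (pb _ _ Hc Hu).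
    rewrite Rabs_pos_eq by lra. nra.
Qed.

Lemma Lg_half a : Lg a (1/2) = exp a / (1 + exp a).
Proof. unfold Lg. pose proof (exp_pos a). field. lra. Qed.

Lemma arith A H dl : 0 < A -> 1 <= H -> H - 1 <= dl ->
  Rabs (A * H / (1 + A * H) - A / (1 + A)) <= dl * Rmin (A / (1 + A)) (1 - A / (1 + A)).
Proof.
  intros HA HH Hd.
  assert (E : A * H / (1 + A * H) - A / (1 + A) = A * (H - 1) / ((1 + A) * (1 + A * H))) by (field; nra).
  rewrite E. rewrite Rabs_pos_eq. 2:{ apply Rle_mult_inv_pos. nra. nra. }
  unfold Rmin. destruct (Rle_dec _ _).
  - replace (dl * (A / (1 + A))) with (dl * A * (1 + A * H) / ((1 + A) * (1 + A * H))) by (field; nra).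
    unfold Rdiv. apply Rmult_le_compat_r. left; apply Rinv_0_lt_compat; nra.
    assert (A*(H-1) <= A*dl) by (apply Rmult_le_compat_l; lra).
    assert (0 <= dl*A*(A*H)) by (repeat apply Rmult_le_pos; lra). nra.
  - replace (dl * (1 - A / (1 + A))) with (dl * (1 + A * H) / ((1 + A) * (1 + A * H))) by (field; nra).
    unfold Rdiv. apply Rmult_le_compat_r. left; apply Rinv_0_lt_compat; nra.
    assert (A*H*(H-1) <= A*H*dl) by (apply Rmult_le_compat_l; nra).
    assert (A*(H-1) <= A*H*(H-1)) by (assert (0 <= A*(H-1)*(H-1)) by (repeat apply Rmult_le_pos; lra); nra).
    nra.
Qed.

Lemma not_SE : ~ singular_expansive phi.
Proof.
  intros HSE. destruct (HSE 1 ltac:(lra)) as [dl [Hdl HP]].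
  destruct (cc_small (dl / 4) ltac:(lra)) as [n Hn].
  pose proof (cc_pos n) as Hc. pose proof (cc_le n) as Hc4.
  assert (Hh : 0 <= 1/2 <= 1) by lra.
  set (x := Some (exist (fun p : nat * R => 0 <= snd p <= 1) (n, 1/2) Hh) : Xm).
  destruct (HP x (phi 2 x) (fun t => t)) as [t0 [u [Hu Heq]]].
  - split; [|split]. exact (derivable_continuous id derivable_id). auto. intros y; exists y; auto.
  - intros t. cbv beta. change (dd (phi t x) (phi t (phi 2 x)) <= dl * dist_set (phi t x) (Sing phi)).
    rewrite <- phi_comp.
    apply Rle_trans with (dl * (cc n * Rmin (Lg (t * cc n) (1/2)) (1 - Lg (t * cc n) (1/2)))).
    2:{ apply Rmult_le_compat_l. lra. apply (dist_lb Xm _ _ _ None).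
        intros s; reflexivity. intros a Ha. apply (sing_lb n _ _ a Ha). }
    unfold dd. unfold x. cbn [phi option_map flowS e proj1_sig fst snd].
    replace ((2 + Lg (t * cc n) (1 / 2)) * cc n - (2 + Lg ((t + 2) * cc n) (1 / 2)) * cc n)
      with (- (cc n * (Lg ((t + 2) * cc n) (1 / 2) - Lg (t * cc n) (1 / 2)))) by ring.
    rewrite Rabs_Ropp, Rabs_mult, (Rabs_pos_eq (cc n)) by lra.
    rewrite !Lg_half. replace ((t + 2) * cc n) with (t * cc n + 2 * cc n) by ring.
    rewrite exp_plus.
    pose proof (exp_pos (t * cc n)).
    assert (1 <= exp (2 * cc n)) by (pose proof (exp_ge1p (2 * cc n)); lra).
    assert (exp (2 * cc n) - 1 <= dl) by (pose proof (exp_le (2 * cc n) ltac:(lra)); lra).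
    pose proof (arith _ _ _ H H0 H1).
    replace (dl * (cc n * Rmin (exp (t * cc n) / (1 + exp (t * cc n))) (1 - exp (t * cc n) / (1 + exp (t * cc n)))))
      with (cc n * (dl * Rmin (exp (t * cc n) / (1 + exp (t * cc n))) (1 - exp (t * cc n) / (1 + exp (t * cc n))))) by ring.
    apply Rmult_le_compat_l; lra.
  - rewrite <- phi_comp in Heq. unfold x in Heq. cbn [phi option_map flowS fst snd] in Heq. injection Heq. intros Hl.
    rewrite !Lg_half in Hl.
    pose proof (exp_pos ((t0 + 2) * cc n)). pose proof (exp_pos (u * cc n)).
    assert (exp ((t0 + 2) * cc n) = exp (u * cc n)).
    { apply (f_equal (fun z => z / (1 - z))) in Hl. cbv beta in Hl.
      replace (exp ((t0 + 2) * cc n) / (1 + exp ((t0 + 2) * cc n)) / (1 - exp ((t0 + 2) * cc n) / (1 + exp ((t0 + 2) * cc n)))) with (exp ((t0 + 2) * cc n)) in Hl by (field; split; lra).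
      replace (exp (u * cc n) / (1 + exp (u * cc n)) / (1 - exp (u * cc n) / (1 + exp (u * cc n)))) with (exp (u * cc n)) in Hl by (field; split; lra).
      auto. }
    apply exp_inv in H1. apply Rmult_eq_reg_r in H1; lra.
Qed.

Lemma half_small r : 0 < r -> exists N, (/2) ^ N < r.
Proof.
  intros Hr. destruct (pow_lt_1_zero (/2)) with (y := r) as [N HN].
  rewrite Rabs_pos_eq; lra. exact Hr.
  exists N. specialize (HN N ltac:(lia)). rewrite Rabs_pos_eq in HN. lra. apply pow_le. lra.
Qed.

Lemma list_min_pos (l : list nat) : exists eta, 0 < eta /\ forall j, In j l -> eta <= (/2) ^ j.
Proof.
  induction l as [|j l [eta [He H]]].
  - exists 1. split. lra. intros j [].
  - exists (Rmin eta ((/2) ^ j)). split. apply Rmin_pos. auto. apply pow_lt. lra.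
    intros k [<-|Hk]. apply Rmin_r. apply Rle_trans with eta. apply Rmin_l. auto.
Qed.

Lemma Lg_upper a u : 0 <= u < 1 -> Lg a u <= exp a / (1 - u).
Proof.
  intros Hu. pose proof (D_pos a u ltac:(lra)). pose proof (exp_pos a). unfold Lg, Rdiv.
  apply Rle_trans with (exp a * / (1 - u + u * exp a)).
  apply Rmult_le_compat_r. left; apply Rinv_0_lt_compat; lra. nra.
  apply Rmult_le_compat_l. lra. apply Rinv_le_contravar. lra. nra.
Qed.

Lemma Lg_u0 a : Lg a 0 = 0.
Proof. unfold Lg. unfold Rdiv. ring. Qed.
Lemma Lg_u1 a : Lg a 1 = 1.
Proof. unfold Lg. pose proof (exp_pos a). replace (1 - 1 + 1 * exp a) with (exp a) by ring. field. lra. Qed.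

Lemma no_compact_inv (L : Xm -> Prop) : compact_set L -> invariant phi L ->
  (forall x, L x -> ~ Sing phi x) -> forall x, ~ L x.
Proof.
  intros Hc Hi Hn p Hp.
  destruct p as [[[n u] Hu]|].
  2:{ apply (Hn None Hp). intros t; reflexivity. }
  cbn [snd] in Hu.
  assert (Hu' : 0 < u < 1).
  { destruct (Req_dec u 0) as [->|H0].
    - exfalso. apply (Hn _ Hp). intros t. cbn [phi option_map flowS fst snd]. f_equal. apply S01_eq. cbn.
      f_equal. apply Lg_u0.
    - destruct (Req_dec u 1) as [->|H1].
      + exfalso. apply (Hn _ Hp). intros t. cbn [phi option_map flowS fst snd]. f_equal. apply S01_eq. cbn.
        f_equal. apply Lg_u1.
      + lra. }
  assert (H0 : 0 <= snd (n, 0) <= 1) by (cbn; lra).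
  set (a := Some (exist (fun p : nat * R => 0 <= snd p <= 1) (n, 0) H0) : Xm).
  assert (Sa : Sing phi a).
  { intros t. unfold a. cbn [phi option_map flowS fst snd]. f_equal. apply S01_eq. cbn.
    f_equal. apply Lg_u0. }
  destruct (Hc nat (fun j q => (/2) ^ j < dd q a)) as [l Hl].
  - intros j q Hq. exists (dd q a - (/2) ^ j). split. lra.
    intros y Hy. change (dd q y < dd q a - (/ 2) ^ j) in Hy.
    pose proof (dd_tri q y a). lra.
  - intros q Hq. assert (q <> a) by (intros ->; apply (Hn a Hq Sa)).
    assert (0 < dd q a).
    { pose proof (dd_ge0 q a). destruct H1; auto. symmetry in H1. apply dd_eq0 in H1. tauto. }
    apply half_small in H1. exact H1.
  - destruct (list_min_pos l) as [eta [He Heta]].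
    assert (Hpos : 0 < eta * (1 - u) / 2) by (apply Rdiv_lt_0_compat; nra).
    pose proof (cc_pos n) as Hc0. pose proof (cc_le n).
    set (t := ln (eta * (1 - u) / 2) / cc n).
    assert (Ht : t * cc n = ln (eta * (1 - u) / 2)) by (unfold t; field; lra).
    destruct (Hl _ (Hi t _ Hp)) as [j [Hj Hd]].
    pose proof (Heta j Hj).
    revert Hd. unfold dd, a. cbn [phi option_map flowS e proj1_sig fst snd].
    rewrite Ht.
    pose proof (Lg_upper (ln (eta * (1 - u) / 2)) u ltac:(lra)).
    rewrite exp_ln in H2 by auto.
    pose proof (Lg_range (ln (eta * (1 - u) / 2)) u ltac:(lra)).
    replace ((2 + Lg (ln (eta * (1 - u) / 2)) u) * cc n - (2 + 0) * cc n)
      with (cc n * Lg (ln (eta * (1 - u) / 2)) u) by ring.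
    rewrite Rabs_pos_eq by nra.
    replace (eta * (1 - u) / 2 / (1 - u)) with (eta / 2) in H2 by (field; lra).
    intros. nra.
Qed.

Lemma inv_expansive (L : Xm -> Prop) : compact_set L -> invariant phi L ->
  (forall x, L x -> ~ Sing phi x) -> expansive_on phi L.
Proof.
  intros Hc Hi Hn. pose proof (no_compact_inv L Hc Hi Hn) as HL.
  intros eps Heps. exists 1. split. lra. intros x y s Lx. exfalso. exact (HL x Lx).
Qed.

Definition clamp (y : R) : R := Rmax 0 (Rmin 1 y).
Lemma clamp_range y : 0 <= snd (0%nat, clamp y) <= 1.
Proof. cbn. unfold clamp, Rmax, Rmin. repeat destruct Rle_dec; lra. Qed.
Lemma clamp_range' y : 0 <= clamp y <= 1.
Proof. exact (clamp_range y). Qed.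
Lemma clamp_id y : 0 <= y <= 1 -> clamp y = y.
Proof. intros. unfold clamp, Rmax, Rmin. repeat destruct Rle_dec; lra. Qed.
Lemma clamp_lip x y : Rabs (clamp x - clamp y) <= Rabs (x - y).
Proof. unfold clamp, Rmax, Rmin, Rabs. repeat destruct Rle_dec; repeat destruct Rcase_abs; lra. Qed.

Definition pt (n : nat) (y : R) : Xm :=
  Some (exist (fun p : nat * R => 0 <= snd p <= 1) (n, clamp y) (clamp_range' y)).

Lemma piece_compact (I : Type) (U : I -> Xm -> Prop) (n : nat) :
  (forall i, @Defs.open_set Xm (U i)) -> (forall x, exists i, U i x) ->
  exists l : list I, forall u (Hu : 0 <= snd (n, u) <= 1), exists i, In i l /\
     U i (Some (exist (fun p : nat * R => 0 <= snd p <= 1) (n, u) Hu)).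
Proof.
  intros Ho Hcov.
  assert (Hch : forall y, {i | U i (pt n y)}).
  { intros y. apply constructive_indefinite_description. apply Hcov. }
  set (ifun := fun y => proj1_sig (Hch y)).
  assert (Hif : forall y, U (ifun y) (pt n y)) by (intros y; exact (proj2_sig (Hch y))).
  set (V := fun y x : R => 0 <= y <= 1 /\ exists r, 0 < r /\ forall z, Rabs (z - x) < r -> U (ifun y) (pt n z)).
  assert (Hcf : forall y, (exists x, V y x) -> (fun y => 0 <= y <= 1) y).
  { intros y [x [H _]]. exact H. }
  set (fam := Rtopology.mkfamily (fun y => 0 <= y <= 1) V Hcf).
  destruct (Rtopology.compact_P3 0 1 fam) as [D [Hcov' [l Hl]]].
  - split.
    + intros x Hx. exists x. cbn. split; auto.
      destruct (Ho (ifun x) (pt n x) (Hif x)) as [r [Hr Hball]].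
      exists r. split; auto. intros z Hz. apply Hball.
      change (dd (pt n x) (pt n z) < r). unfold dd, pt. cbn [e proj1_sig fst snd].
      replace ((2 + clamp x) * cc n - (2 + clamp z) * cc n) with (cc n * (clamp x - clamp z)) by ring.
      rewrite Rabs_mult, Rabs_pos_eq by (pose proof (cc_pos n); lra).
      pose proof (clamp_lip x z). pose proof (cc_le n). pose proof (cc_pos n).
      pose proof (Rabs_pos (clamp x - clamp z)).
      rewrite Rabs_minus_sym in Hz. nra.
    + intros y x [Hy [r [Hr Hb]]]. exists (mkposreal (r / 2) ltac:(lra)).
      intros x' Hx'. unfold Rtopology.disc in Hx'. cbn in Hx'. split; auto.
      exists (r / 2). split. lra. intros z Hz. apply Hb.
      replace (z - x) with ((z - x') + (x' - x)) by ring.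
      pose proof (Rabs_triang (z - x') (x' - x)). lra.
  - exists (map ifun l). intros u Hu.
    destruct (Hcov' u Hu) as [y [[Hy [r [Hr Hb]]] HD]].
    exists (ifun y). split.
    + apply in_map. apply Hl. split; auto.
    + specialize (Hb u). rewrite Rminus_diag, Rabs_R0 in Hb. specialize (Hb Hr).
      unfold pt in Hb. replace (Some (exist (fun p : nat * R => 0 <= snd p <= 1) (n, u) Hu))
        with (Some (exist (fun p : nat * R => 0 <= snd p <= 1) (n, clamp u) (clamp_range' u)) : Xm); auto.
      f_equal. apply S01_eq. cbn. rewrite clamp_id; auto.
Qed.

Lemma X_compact : @compact_space Xm.
Proof.
  intros I U Ho Hcov.
  destruct (Hcov None Logic.I) as [i0 Hi0].
  destruct (Ho i0 None Hi0) as [r [Hr Hball]].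
  destruct (cc_small (r / 4) ltac:(lra)) as [N HN].
  assert (Hfin : forall N, exists l : list I, forall m, (m < N)%nat ->
     forall u (Hu : 0 <= snd (m, u) <= 1), exists i, In i l /\
     U i (Some (exist (fun p : nat * R => 0 <= snd p <= 1) (m, u) Hu))).
  { induction N0 as [|K [l IH]].
    - exists nil. intros m Hm. lia.
    - destruct (piece_compact I U K Ho (fun x => Hcov x Logic.I)) as [l' Hl'].
      exists (l ++ l'). intros m Hm u Hu.
      destruct (Nat.eq_dec m K) as [->|Hne].
      + destruct (Hl' u Hu) as [i [Hi HU]]. exists i. split; auto. apply in_or_app; auto.
      + destruct (IH m ltac:(lia) u Hu) as [i [Hi HU]]. exists i. split; auto. apply in_or_app; auto. }
  destruct (Hfin N) as [l Hl].
  exists (i0 :: l). intros x _.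
  destruct x as [[[m u] Hu]|].
  - destruct (lt_dec m N) as [Hm|Hm].
    + destruct (Hl m Hm u Hu) as [i [Hi HU]]. exists i. split; auto. right; auto.
    + exists i0. split. left; auto. apply Hball.
      change (dd None (Some (exist (fun p : nat * R => 0 <= snd p <= 1) (m, u) Hu)) < r).
      unfold dd. cbn [e proj1_sig fst snd]. cbn [snd] in Hu.
      pose proof (cc_mono N m ltac:(lia)). pose proof (cc_pos m).
      rewrite Rminus_0_l, Rabs_Ropp, Rabs_pos_eq by nra. nra.
  - exists i0. split; auto. left; auto.
Qed.

Theorem mainTheorem16 :
  exists (X : MetricSpace) (phi : R -> X -> X),
    @compact_space X /\ is_flow phi /\ ~ singular_expansive phi /\
    (forall L : X -> Prop, compact_set L -> invariant phi L ->
       (forall x, L x -> ~ Sing phi x) -> expansive_on phi L).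
Proof.
  exists Xm, phi. split; [exact X_compact|split; [exact phi_flow|split; [exact not_SE|]]].
  exact inv_expansive.
Qed.
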